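(* Let $q\in\mathbb{C}$ with $|q|<1$ and let $k,l\ge0$ be integers. Then for $x\in[0,1]$, $$B_{k,l}(x,q)=\frac{x^k}{[k]_q!}\sum_{m=0}^l\frac{[m]_q!}{m!}\binom{l}{m}_q\beta_{l-m}^{(k)}((1-x)_q,q)\,\Delta^k0^m,$$ where $\Delta^k0^m=\sum_{j=0}^k\binom{k}{j}(-1)^{k-j}j^m$ (with $0^0=1$).
   Context: For a number $x$, $[x]_q=\frac{1-q^x}{1-q}$; $[n]_q!=[n]_q\cdots[1]_q$, $[0]_q!=1$; $\binom{n}{k}_q=\frac{[n]_q!}{[k]_q![n-k]_q!}$ for $0\le k\le n$ and $0$ for $k>n$. $(1-b)_q^n=\prod_{i=1}^n(1-bq^{i-1})$. $B_{k,n}(x,q)=\binom{n}{k}_q x^k(1-x)_q^{n-k}$ if $n\ge k$ and $0$ if $n<k$. $\Delta^k0^m$ is the $k$-th forward difference ($\Delta f(y)=f(y+1)-f(y)$) of $y\mapsto y^m$ at $y=0$. $B_m^{(k)}$ are the Bernoulli numbers of order $k$: $\left(\frac{t}{e^t-1}\right)^k=\sum_{m\ge0}B_m^{(k)}\frac{t^m}{m!}$. The symbol $\beta_n^{(k)}((1-x)_q,q)$ means $\sum_{m=0}^n\binom{n}{m}_q\frac{[m]_q!}{m!}B_m^{(k)}(1-x)_q^{n-m}$, i.e. the $q$-Bernoulli polynomial of order $k$, $\beta_n^{(k)}(y,q)=\sum_{m=0}^n\binom{n}{m}_q\frac{[m]_q!}{m!}B_m^{(k)}y^{n-m}$ (defined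 by $\left(\frac{z}{e^z-1}\right)^k\sum_{j\ge0}\frac{y^jz^j}{[j]_q!}=\sum_{n\ge0}\beta_n^{(k)}(y,q)\frac{z^n}{[n]_q!}$), with each power $y^j$ replaced umbrally by $(1-x)_q^j$. *)

(* Defs.v *)
(* Complex numbers are 'R[i] = complex R for a real closed
   field R (with R the reals this is C). *)
From HB Require Import structures.
From mathcomp Require Import all_boot all_order all_algebra.
From mathcomp Require Import complex.
Set Implicit Arguments. Unset Strict Implicit. Unset Printing Implicit Defensive.
Import Order.TTheory GRing.Theory Num.Theory.
Local Open Scope ring_scope.

Section QDefs.
Variable F : fieldType.

Definition qnum (q : F) (n : nat) : F := (1 - q ^+ n) / (1 - q).
Definition qfact (q : F) (n : nat) : F := \prod_(i < n) qnum q i.+1.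
Definition qbinom (q : F) (n k : nat) : F :=
  if (k <= n)%N then qfact q n / (qfact q k * qfact q (n - k)) else 0.
(* (1 - b)_q^n = prod_{i=1}^n (1 - b q^(i-1)) *)
Definition qpoch (b q : F) (n : nat) : F := \prod_(i < n) (1 - b * q ^+ i).
Definition qBernstein (k n : nat) (x q : F) : F :=
  if (k <= n)%N then qbinom q n k * x ^+ k * qpoch x q (n - k) else 0.
End QDefs.

(* Bernoulli numbers B_m (order 1), t/(e^t-1) = sum B_m t^m/m!, via the
   coefficient identity sum_{j=0}^{m} C(m+1,j) B_j = [m = 0]. *)
Fixpoint bern_seq (n : nat) : seq rat :=
  match n with
  | 0 => [::]
  | n'.+1 =>
      let s := bern_seq n' in
      rcons s (((n' == 0)%N)%:R
               - (n'.+1%:R)^-1 * \sum_(j < n') ('C(n'.+1, j))%:R * s`_j)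
  end.
Definition bern1 (m : nat) : rat := (bern_seq m.+1)`_m.

(* Bernoulli numbers of order k: (t/(e^t-1))^k = sum B_m^(k) t^m/m!,
   the k-th power of the exponential generating function computed as an
   iterated binomial convolution (product of EGFs). *)
Fixpoint bernk (k m : nat) : rat :=
  match k with
  | 0 => ((m == 0)%N)%:R
  | k'.+1 => \sum_(j < m.+1) ('C(m, j))%:R * bernk k' j * bern1 (m - j)
  end.

Section QBeta.
Variable F : fieldType.
(* beta_n^(k)(y,q) with y^j replaced umbrally by (1-x)_q^j *)
Definition qbeta_umbral (k n : nat) (x q : F) : F :=
  \sum_(m < n.+1) qbinom q n m * (qfact q m / (m`!)%:R) * ratr (bernk k m)
                  * qpoch x q (n - m).
Definition delta0 (k m : nat) : F :=
  \sum_(j < k.+1) ('C(k, j))%:R * (-1) ^+ (k - j) * (j%:R) ^+ m.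
End QBeta.

(* Main.v *)
Require Import Defs.
From HB Require Import structures.
From mathcomp Require Import all_boot all_order all_algebra.
From mathcomp Require Import complex ring lra zify.
Import Order.TTheory GRing.Theory Num.Theory.
Local Open Scope ring_scope.

Lemma bern_seq_size n : size (bern_seq n) = n.
Proof. by elim: n => [|n IH] //=; rewrite size_rcons IH. Qed.

Lemma bern_seq_nth n j : (j < n)%N -> (bern_seq n)`_j = bern1 j.
Proof.
elim: n => [|n IH] //; rewrite ltnS leq_eqVlt => hj.
case/orP: hj => [/eqP -> //| hj].
by rewrite /= nth_rcons bern_seq_size ifT //; exact: IH.
Qed.

Lemma bern_rec n : \sum_(j < n.+1) ('C(n.+1, j))%:R * bern1 j = (n == 0%N)%:R :> rat.
Proof.
rewrite big_ord_recr /= binSn.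
have -> : bern1 n = (n == 0%N)%:R - (n.+1%:R)^-1 * \sum_(j < n) ('C(n.+1, j))%:R * bern1 j.
  rewrite /bern1 /= nth_rcons bern_seq_size ltnn eqxx; congr (_ - _ * _).
  by apply: eq_bigr => [[j hj]] _ /=; rewrite bern_seq_nth.
have hn : (n.+1%:R : rat) != 0 by rewrite pnatr_eq0.
rewrite mulrBr mulrA mulfV // mul1r addrC subrK.
by case: n hn => [|n] _ /=; rewrite ?mul1r ?mulr0.
Qed.

Section Egf.
Variable F : numFieldType.

Definition egf (N : nat) (a : nat -> F) : {poly F} := \poly_(i < N) (a i / (i`!)%:R).
Definition eqN (N : nat) (p q : {poly F}) := forall i, (i < N)%N -> p`_i = q`_i.

Lemma fact_neq0 n : (n`!)%:R != 0 :> F.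
Proof. by rewrite pnatr_eq0 -lt0n fact_gt0. Qed.

Lemma eqN_refl N p : eqN N p p. Proof. by []. Qed.
Lemma eqN_sym N p q : eqN N p q -> eqN N q p. Proof. by move=> h i /h. Qed.
Lemma eqN_trans N p q r : eqN N p q -> eqN N q r -> eqN N p r.
Proof. by move=> h1 h2 i hi; rewrite h1 // h2. Qed.
Lemma eqN_mul N p p' q q' : eqN N p p' -> eqN N q q' -> eqN N (p * q) (p' * q').
Proof.
move=> h1 h2 i hi; rewrite !coefM; apply: eq_bigr => j _.
have hj : (j <= i)%N by rewrite -ltnS.
rewrite h1 ?h2 //; [exact: leq_ltn_trans (leq_subr _ _) hi | exact: leq_ltn_trans hj hi].
Qed.
Lemma eqN_exp N p q n : eqN N p q -> eqN N (p ^+ n) (q ^+ n).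
Proof. by move=> h; elim: n => [|n IH] //; rewrite !exprS; apply: eqN_mul. Qed.

Lemma egf_mul N a b n : (n < N)%N ->
  (egf N a * egf N b)`_n = (\sum_(j < n.+1) ('C(n, j))%:R * a j * b (n - j)%N) / (n`!)%:R.
Proof.
move=> hn; rewrite coefM mulr_suml; apply: eq_bigr => [[j /=]]; rewrite ltnS => hj _.
rewrite !coef_poly (leq_ltn_trans hj hn) (leq_ltn_trans (leq_subr _ _) hn).
have := bin_fact hj => /(congr1 (fun z => z%:R : F)); rewrite !natrM => e.
rewrite -e; have := fact_neq0 j; have := fact_neq0 (n - j) => h1 h2.
have h3 : 'C(n, j)%:R != 0 :> F by rewrite pnatr_eq0 -lt0n bin_gt0.
by field; rewrite h1 h2 h3.
Qed.


Definition Eg N (j : nat) := egf N (fun n => (j%:R : F) ^+ n).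

Lemma Eg_mul N a b : eqN N (Eg N a * Eg N b) (Eg N (a + b)).
Proof.
move=> i hi; rewrite /Eg egf_mul // coef_poly hi natrD [(a%:R + _)]addrC exprDn.
congr (_ / _); apply: eq_bigr => j _.
by rewrite mulr_natl mulrnAl [a%:R ^+ _ * _]mulrC.
Qed.

Lemma Eg0 N : eqN N (Eg N 0) 1.
Proof.
move=> i hi; rewrite /Eg coef_poly hi coefC expr0n.
case: i hi => [|i] _; first by rewrite fact0 divr1.
by rewrite mul0r.
Qed.

Lemma Eg_exp N j : eqN N (Eg N 1 ^+ j) (Eg N j).
Proof.
elim: j => [|j IH]; first by rewrite expr0; exact: eqN_sym (Eg0 N).
rewrite exprSr -[j.+1]addn1; apply: (@eqN_trans N _ (Eg N j * Eg N 1)); last exact: Eg_mul.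
exact: eqN_mul.
Qed.

Lemma coef_sign m (p : {poly F}) i : ((-1) ^+ m * p)`_i = (-1) ^+ m * p`_i.
Proof.
elim: m => [|m IH]; first by rewrite !mul1r.
by rewrite !exprS !mulNr !mul1r coefN IH.
Qed.

Lemma delta_egf N k : eqN N (egf N (delta0 F k)) ((Eg N 1 - 1) ^+ k).
Proof.
move=> i hi; rewrite addrC exprDn coef_sum coef_poly hi /delta0 mulr_suml.
apply: eq_bigr => j _; rewrite coefMn coef_sign (Eg_exp N j _ hi) /Eg coef_poly hi.
by rewrite -!mulrA mulr_natl.
Qed.

Definition dd (n : nat) : F := (n != 0%N)%:R.

Lemma dd_egf N : eqN N (Eg N 1 - 1) (egf N dd).
Proof.
move=> i hi; rewrite coefB /Eg !coef_poly hi coefC expr1n /dd.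
by case: i hi => [|i] _ /=; rewrite ?fact0 ?divr1 ?subrr ?mul0r ?subr0.
Qed.

Definition b1 (n : nat) : F := ratr (bern1 n).
Definition bk (k n : nat) : F := ratr (bernk k n).

Lemma bk_egf N k : eqN N (egf N (bk k.+1)) (egf N (bk k) * egf N b1).
Proof.
move=> i hi; rewrite egf_mul // coef_poly hi /bk /=.
rewrite rmorph_sum; congr (_ / _); apply: eq_bigr => j _.
by rewrite !rmorphM /= ratr_nat.
Qed.

Lemma bk_pow N k : eqN N (egf N (bk k)) (egf N b1 ^+ k).
Proof.
elim: k => [|k IH].
  move=> i hi; rewrite coef_poly hi /bk /= expr0 coefC.
  by case: i hi => [|i] _ /=; rewrite ?fact0 ?divr1 ?rmorph1 ?rmorph0 ?mul0r.
apply: eqN_trans (bk_egf N k) _; rewrite exprSr.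
by apply: eqN_mul.
Qed.


Lemma conv_delta_bk_aux N : eqN N (egf N b1 * egf N dd) 'X.
Proof.
move=> i hi; rewrite egf_mul // coefX.
case: i hi => [|n] hi.
  by rewrite big_ord1 /dd /= mulr0 mul0r.
rewrite big_ord_recr /= subnn /dd /= mulr0 addr0.
have -> : \sum_(j < n.+1) ('C(n.+1, j))%:R * b1 j * ((n.+1 - j)%N != 0%N)%:R
          = \sum_(j < n.+1) ('C(n.+1, j))%:R * b1 j.
  apply: eq_bigr => [[j hj]] _ /=; rewrite subn_eq0 leqNgt hj /= mulr1 //.
have -> : \sum_(j < n.+1) ('C(n.+1, j))%:R * b1 j = (n == 0%N)%:R.
  have e := congr1 (fun z : rat => ratr z : F) (bern_rec n).
  rewrite /= rmorph_sum ratr_nat in e; rewrite -e; apply: eq_bigr => j _.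
  by rewrite rmorphM /= ratr_nat.
by case: n {hi} => [|n] /=; rewrite ?fact1 ?divr1 ?mul0r.
Qed.

Lemma conv_delta_bk k n :
  \sum_(j < n.+1) ('C(n, j))%:R * delta0 F k j * bk k (n - j)%N = (n == k)%:R * (n`!)%:R.
Proof.
have h : eqN n.+1 (egf n.+1 (delta0 F k) * egf n.+1 (bk k)) ('X ^+ k).
  apply: (@eqN_trans _ _ ((Eg n.+1 1 - 1) ^+ k * egf n.+1 b1 ^+ k)).
    by apply: eqN_mul; [exact: delta_egf | exact: bk_pow].
  apply: (@eqN_trans _ _ (egf n.+1 dd ^+ k * egf n.+1 b1 ^+ k)).
    by apply: eqN_mul; [apply: eqN_exp; exact: dd_egf | exact: eqN_refl].
  rewrite -exprMn; apply: eqN_exp; rewrite mulrC; exact: conv_delta_bk_aux.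
have := h n (ltnSn n); rewrite egf_mul // coefXn => e.
by rewrite -e divfK // fact_neq0.
Qed.

End Egf.
Lemma tri_sum (F : nmodType) (f : nat -> nat -> F) L :
  \sum_(m < L) \sum_(j < L - m) f m (m + j)%N = \sum_(n < L) \sum_(m < n.+1) f m n.
Proof.
elim: L => [|L IH]; first by rewrite !big_ord0.
rewrite [RHS]big_ord_recr /= -IH.
have -> : \sum_(m < L.+1) \sum_(j < L.+1 - m) f m (m + j)%N =
   \sum_(m < L.+1) (\sum_(j < L - m) f m (m + j)%N + f m L).
  apply: eq_bigr => [[m hm]] _ /=; rewrite ltnS in hm.
  by rewrite subSn // big_ord_recr /= subnKC.
by rewrite big_split /= big_ord_recr /= subnn big_ord0 addr0.
Qed.

Lemma sum_aux (F : numFieldType) n (A D : F) (t : 'I_n -> F) :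
  A * (\sum_(j < n) t j) * D = \sum_(j < n) (A * t j * D).
Proof. by rewrite mulr_sumr mulr_suml. Qed.

Lemma main_gen (F : numFieldType) (q X : F) k l (hQ : forall n, qfact q n != 0) :
  \sum_(m < l.+1) (qfact q m / (m`!)%:R) * qbinom q l m
                    * qbeta_umbral k (l - m) X q * delta0 F k m
  = if (k <= l)%N then qfact q l / qfact q (l - k) * qpoch X q (l - k) else 0.
Proof.
pose G m n := qfact q l / qfact q (l - n) * qpoch X q (l - n) *
   (('C(n, m))%:R * delta0 F k m * bk F k (n - m) / (n`!)%:R).
transitivity (\sum_(m < l.+1) \sum_(j < l.+1 - m) G m (m + j)%N).
  apply: eq_bigr => [[m hm]] _ /=; rewrite ltnS in hm.
  rewrite /qbeta_umbral -subSn //. rewrite sum_aux; apply: eq_bigr => [[j hj]] _ /=.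
  rewrite subSn // ltnS in hj.
  rewrite /G /qbinom hm hj subnDA addKn /bk.
  have e := bin_fact (leq_addr j m); rewrite addKn in e.
  have e' : ('C(m + j, m))%:R * ((m`!)%:R * (j`!)%:R) = ((m + j)`!)%:R :> F.
    by rewrite -!natrM e.
  rewrite -e'.
  have h1 := hQ m; have h2 := hQ j; have h3 := hQ (l - m)%N; have h4 := hQ (l - m - j)%N.
  have h5 := fact_neq0 F m; have h6 := fact_neq0 F j.
  have h7 : ('C(m + j, m))%:R != 0 :> F by rewrite pnatr_eq0 -lt0n bin_gt0 leq_addr.
  by field; rewrite h1 h2 h3 h4 h5 h6 h7.
rewrite tri_sum.
transitivity (\sum_(n < l.+1) qfact q l / qfact q (l - n) * qpoch X q (l - n) * (n == k :> nat)%:R).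
  apply: eq_bigr => n _; rewrite /G -mulr_sumr -mulr_suml conv_delta_bk.
  by rewrite mulfK // fact_neq0.
case: (leqP k l) => hk.
  rewrite -ltnS in hk.
  rewrite (bigD1 (Ordinal hk)) //= eqxx mulr1 big1 ?addr0 // => i hi.
  suff -> : (i == k :> nat) = false by rewrite mulr0.
  apply/negbTE; apply: contra hi => /eqP e; apply/eqP/val_inj => /=; exact: e.
rewrite big1 // => [[i hi]] _ /=.
suff -> : (i == k) = false by rewrite mulr0.
apply/negbTE; rewrite neq_ltn; apply/orP; left; exact: leq_ltn_trans hk.
Qed.

Local Open Scope complex_scope.

Lemma qfact_neq0 (R : rcfType) (q : R[i]) n : `|q| < 1 -> qfact q n != 0.
Proof.
move=> hq.
have h1 : forall m, 1 - q ^+ m.+1 != 0.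
  move=> m; rewrite subr_eq0; apply/eqP => e.
  have : `|q ^+ m.+1| < 1 by rewrite normrX exprn_ilt1.
  by rewrite -e normr1 ltxx.
have h2 : 1 - q != 0 by have := h1 0%N; rewrite expr1.
elim: n => [|n IH]; first by rewrite /qfact big_ord0 oner_neq0.
rewrite /qfact big_ord_recr /= mulf_neq0 //.
by rewrite /qnum mulf_neq0 // invr_neq0.
Qed.

Theorem corollary11 (R : rcfType) (q : R[i]) (k l : nat) (x : R) :
  `|q| < 1 -> 0 <= x <= 1 ->
  qBernstein k l x%:C q =
    (x%:C) ^+ k / qfact q k *
    \sum_(m < l.+1) (qfact q m / (m`!)%:R) * qbinom q l m
                    * qbeta_umbral k (l - m) x%:C q * delta0 _ k m.
Proof.
move=> hq _.
have hQ : forall n, qfact q n != 0 by move=> n; exact: qfact_neq0.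
rewrite main_gen // /qBernstein.
case: (leqP k l) => hk; last by rewrite mulr0.
rewrite /qbinom hk.
have h1 := hQ k; have h2 := hQ l; have h3 := hQ (l - k)%N.
by field; rewrite h1 h3.
Qed.
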